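(* Let $\mathcal X\subseteq[0,1]$ be a Borel set with $0\in\mathcal X$ and $1\in\mathcal X$, and fix $\mu\in(0,1)$. Let $\mathcal H_\mu=\{P\in\mathcal P_{\mathcal X}:\mathbb E_P[X]=\mu\}$, let $I_\mu=[(\mu-1)^{-1},\mu^{-1}]$, and let $$\mathcal E^{\mathrm{cb}}_\mu=\big\{E_\beta:x\mapsto 1+\beta(x-\mu)\,,\ \beta\in I_\mu\big\}.$$ Then $\mathcal E^{\mathrm{cb}}_\mu$ is the optimal e-class for $\mathcal H_\mu$.
   Context: $\mathcal P_{\mathcal Z}$ denotes the set of Borel probability measures on a Borel set $\mathcal Z\subseteq\mathbb R^d$. A hypothesis is a non-empty $\mathcal H\subseteq\mathcal P_{\mathcal Z}$. An e-variable for $\mathcal H$ is a Borel measurable $E:\mathcal Z\to[0,+\infty)$ with $\mathbb E_P[E]\le 1$ for all $P\in\mathcal H$; $\mathcal E_{\mathcal H}$ is the set of all e-variables for $\mathcal H$, and an e-class is any subset of $\mathcal E_{\mathcal H}$. For functions $f,f'$ on $\mathcal Z$, $f\succeq f'$ means $f(z)\ge f'(z)$ for all $z\in\mathcal Z$. An e-class $\mathcal E$ majorises an e-class $\mathcal E'$ if for every $E'\in\mathcal E'$ there is $E\in\mathcal E$ with $E\succeq E'$; $\mathcal E$ is a majorising e-class if it majorises $\mathcal E_{\mathcal H}$. A majorising e-class is called optimal if it is contained in every other majorising e-class. *)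

(* Defs.v *)
From HB Require Import structures.
From mathcomp Require Import all_boot all_order all_algebra.
From mathcomp Require Import all_classical all_reals all_analysis.
Set Implicit Arguments. Unset Strict Implicit. Unset Printing Implicit Defensive.
Import Order.TTheory GRing.Theory Num.Theory.
Local Open Scope classical_set_scope.
Local Open Scope ring_scope.

(* A Borel probability measure on X
   is encoded as a Borel probability measure P on R with P X = 1.
   A function on X is encoded as a function R -> R vanishing outside X. *)

Definition prob_on (R : realType) (X : set R) : set (probability R R) :=
  [set P | P X = 1%E].

Definition evar (R : realType) (X : set R) (H : set (probability R R))
  (E : R -> R) : Prop :=
  [/\ measurable_fun setT E,
      (forall x, 0 <= E x),
      (forall x, ~ X x -> E x = 0) &
      (forall P, H P -> (\int[P]_x (E x)%:E <= 1)%E)].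

Definition eclass (R : realType) (X : set R) (H : set (probability R R))
  (C : set (R -> R)) : Prop := C `<=` evar X H.

Definition dominates (R : realType) (X : set R) (f f' : R -> R) : Prop :=
  forall x, X x -> f' x <= f x.

Definition majorises (R : realType) (X : set R) (C C' : set (R -> R)) : Prop :=
  forall E', C' E' -> exists2 E, C E & dominates X E E'.

Definition majorising (R : realType) (X : set R) (H : set (probability R R))
  (C : set (R -> R)) : Prop :=
  eclass X H C /\ majorises X C (evar X H).

Definition optimal_eclass (R : realType) (X : set R) (H : set (probability R R))
  (C : set (R -> R)) : Prop :=
  majorising X H C /\
  forall C', majorising X H C' -> C `<=` C'.

Definition H_mean (R : realType) (X : set R) (mu : R) : set (probability R R) :=
  [set P | prob_on X P /\ (\int[P]_x (x%:E) = mu%:E)%E].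

Definition E_beta (R : realType) (X : set R) (mu beta : R) : R -> R :=
  fun x => if x \in X then 1 + beta * (x - mu) else 0.

Definition Ecb (R : realType) (X : set R) (mu : R) : set (R -> R) :=
  [set E | exists2 beta, (mu - 1)^-1 <= beta <= mu^-1 & E = E_beta X mu beta].

(* Main.v *)
Require Import Defs.
From HB Require Import structures.
From mathcomp Require Import all_boot all_order all_algebra.
From mathcomp Require Import all_classical all_reals all_analysis.
From mathcomp Require Import ring lra.
From mathcomp Require Import measurable_realfun.
Import Order.TTheory GRing.Theory Num.Theory.
Local Open Scope classical_set_scope.
Local Open Scope ring_scope.

Lemma maxdiff (R : realType) (x : R) : Num.max x 0 - Num.max (- x) 0 = x.
Proof.
by have [h|h] := leP x 0; have [h'|h'] := leP (- x) 0; lra.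
Qed.

Lemma dT (R : realType) (c : R) :
  ((@dirac _ R c R : {measure set R -> \bar R}) [set: R] = 1)%E.
Proof. exact: diracT. Qed.

Lemma dE (R : realType) (c : R) A :
  ((@dirac _ R c R : {measure set R -> \bar R}) A = (c \in A)%:R%:E)%E.
Proof. exact: diracE. Qed.

Section twopt.
Context (R : realType) (a b : R) (p q : {nonneg R}) (pq : p%:num + q%:num = 1).
Definition twopt := measure_add (mscale p (@dirac _ R a R)) (mscale q (@dirac _ R b R)).

HB.instance Definition _ := Measure.copy twopt (measure_add (mscale p (@dirac _ R a R)) (mscale q (@dirac _ R b R))).
Let twopt_setT : twopt setT = 1%E.
Proof. rewrite /twopt measure_addE /=; unfold mscale.
transitivity ((p%:num)%:E * 1 + (q%:num)%:E * 1)%E; first by congr (_ * _ + _ * _)%E; exact: diracT.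
by rewrite !mule1 -EFinD pq. Qed.
HB.instance Definition _ := Measure_isProbability.Build _ _ _ twopt twopt_setT.

Definition twoP : probability R R := twopt.

Lemma twopt_ge0 (f : R -> \bar R) : measurable_fun [set: R] f -> (forall x, (0 <= f x)%E) ->
  (\int[twoP]_x f x = p%:num%:E * f a + q%:num%:E * f b)%E.
Proof.
move=> mf f0; rewrite /twoP /twopt /=.
rewrite ge0_integral_measure_add //.
rewrite ge0_integral_mscale //.
rewrite ge0_integral_mscale //.
rewrite !integral_dirac // !dT !mul1e //.
Qed.

Lemma twopt_real (g : R -> R) : measurable_fun setT g ->
  (\int[twoP]_x (g x)%:E = (p%:num * g a + q%:num * g b)%:E)%E.
Proof.
move=> mg.
have mG : measurable_fun setT (EFin \o g) by exact/measurable_EFinP.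
rewrite integralE.
rewrite twopt_ge0; last 2 first.
- exact: measurable_funepos.
- by move=> x; exact: funepos_ge0.
rewrite twopt_ge0; last 2 first.
- exact: measurable_funeneg.
- by move=> x; exact: funeneg_ge0.
have M (y : R) : (maxe y%:E 0 = (Num.max y 0)%:E)%E.
  by rewrite (_ : 0%E = 0%:E) // -EFin_max.
rewrite !funeposE !funenegE /= !M -!EFinM -!EFinD.
congr EFin; rewrite -[in RHS](maxdiff _ (g a)) -[in RHS](maxdiff _ (g b)); ring.
Qed.
Lemma twoP_E A : twoP A = (p%:num * (a \in A)%:R + q%:num * (b \in A)%:R)%:E.
Proof.
have -> : twoP A = measure_add (mscale p (@dirac _ R a R)) (mscale q (@dirac _ R b R)) A by [].
rewrite measure_addE /=; unfold mscale.
by rewrite !dE -!EFinM -EFinD.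
Qed.
Lemma twoP_in (A : set R) : A a -> A b -> twoP A = 1%E.
Proof.
move=> Aa Ab; rewrite twoP_E (_ : (a \in A) = true); last exact: mem_set.
by rewrite (_ : (b \in A) = true) ?mulr1 ?pq //; exact: mem_set.
Qed.
End twopt.


Section Main.
Variables (R : realType) (X : set R) (mu : R).
Hypotheses (mX : measurable X) (X01 : X `<=` `[0, 1]) (X0 : X 0) (X1 : X 1)
  (mu0 : 0 < mu) (mu1 : mu < 1).

Lemma key (E : R -> R) : evar X (H_mean X mu) E ->
  forall a b p q, X a -> X b -> 0 <= p -> 0 <= q -> p + q = 1 ->
  p * a + q * b = mu -> p * E a + q * E b <= 1.
Proof.
move=> [mE E0 _ HE] a b p q Xa Xb p0 q0 pq m.
pose pp := NngNum p0; pose qq := NngNum q0.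
have pq' : pp%:num + qq%:num = 1 by [].
have HP : H_mean X mu (@twoP R a b pp qq pq').
  split.
    exact: twoP_in.
  have := @twopt_real R a b pp qq pq' id (@measurable_id _ _ setT).
  by rewrite /= m.
have := HE _ HP.
rewrite twopt_ge0; last 2 first.
- exact/measurable_EFinP.
- by move=> x; rewrite lee_fin.
by rewrite -!EFinM -EFinD lee_fin.
Qed.

Lemma patch_meas (h : R -> R) : measurable_fun setT h ->
  measurable_fun setT (fun x => if x \in X then h x else 0).
Proof.
move=> mh.
rewrite (_ : (fun x => _) = h \* \1_X); first by apply: measurable_funM => //; exact: measurable_indic.
by apply/funext => x /=; rewrite indicE; case: (x \in X); rewrite ?mulr1 ?mulr0.
Qed.

Let g1 := fun x : R => if x \in X then 1 - x else 0.
Let g2 := fun x : R => if x \in X then x else 0.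

Let mg1 : measurable_fun setT g1.
Proof.
apply: patch_meas; apply: measurable_funB; [exact: measurable_cst|exact: measurable_id].
Qed.

Let mg2 : measurable_fun setT g2.
Proof. apply: patch_meas; exact: measurable_id. Qed.

Let g10 x : 0 <= g1 x.
Proof.
rewrite /g1; case: ifP => // /set_mem /X01; rewrite /= in_itv /= => /andP[_ ?].
by rewrite subr_ge0.
Qed.

Let g20 x : 0 <= g2 x.
Proof.
by rewrite /g2; case: ifP => // /set_mem /X01; rewrite /= in_itv /= => /andP[? _].
Qed.

Let I2 (P : probability R R) : H_mean X mu P -> (\int[P]_x (g2 x)%:E = mu%:E)%E.
Proof.
move=> [PX Pm]; rewrite -Pm; apply: ae_eq_integral => //.
  apply/measurable_EFinP; exact: mg2.
exists (~` X); split.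
- exact: measurableC.
- have h := probability_setC P mX.
  move: PX; rewrite /prob_on /= => PX; rewrite PX subee // in h.
move=> x /= H Xx; apply: H => _; rewrite /g2 (_ : (x \in X) = true) //.
exact: mem_set.
Qed.

Let I1 (P : probability R R) : H_mean X mu P -> (\int[P]_x (g1 x)%:E = (1 - mu)%:E)%E.
Proof.
move=> HP; have [PX _] := HP.
have S : (\int[P]_x (g1 x)%:E + \int[P]_x (g2 x)%:E = 1)%E.
  rewrite -ge0_integralD //; last 4 first.
  - by move=> x _; rewrite lee_fin.
  - exact/measurable_EFinP.
  - by move=> x _; rewrite lee_fin.
  - exact/measurable_EFinP.
  rewrite (eq_integral (fun x => (\1_X x)%:E)); last first.
    move=> x _; rewrite /g1 /g2 indicE; case: (x \in X) => /=.
      by rewrite -EFinD subrK.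
    by rewrite adde0.
  by rewrite integral_indic // setIT.
rewrite I2 // in S.
by rewrite EFinB -S addeK.
Qed.

Lemma Ebeta_evar beta : (mu - 1)^-1 <= beta <= mu^-1 ->
  evar X (H_mean X mu) (E_beta X mu beta).
Proof.
move=> /andP[b1 b2].
have h1 : beta * mu <= 1 by rewrite -ler_pdivlMr // div1r.
have h2 : beta * (mu - 1) <= 1 by rewrite -ler_ndivrMr ?div1r // subr_lt0.
have Eeq : E_beta X mu beta =
    (fun x => (1 - beta * mu) * g1 x + (1 + beta * (1 - mu)) * g2 x).
  apply/funext => x; rewrite /E_beta /g1 /g2; case: (x \in X).
    ring.
  by rewrite !mulr0 addr0.
split.
- rewrite Eeq; apply: measurable_funD; apply: measurable_funM => //;
    exact: measurable_cst.
- move=> x; rewrite Eeq.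
  have := g10 x; have := g20 x; nra.
- move=> x nX; rewrite /E_beta (_ : (x \in X) = false) //.
  by apply/negP => /set_mem.
move=> P HP; rewrite Eeq.
under eq_integral do rewrite EFinD !EFinM.
rewrite ge0_integralD //; last 4 first.
- by move=> x _; apply: mule_ge0; rewrite lee_fin //; lra.
- by apply: measurable_funeM; apply/measurable_EFinP.
- by move=> x _; apply: mule_ge0; rewrite lee_fin //; lra.
- by apply: measurable_funeM; apply/measurable_EFinP.
rewrite !ge0_integralZl //; last 6 first.
- exact/measurable_EFinP.
- by move=> x _; rewrite lee_fin.
- by change (0%:E <= (1 + beta * (1 - mu))%:E)%E; rewrite lee_fin; lra.
- exact/measurable_EFinP.
- by move=> x _; rewrite lee_fin.
- by change (0%:E <= (1 - beta * mu)%:E)%E; rewrite lee_fin; lra.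
rewrite I1 // I2 // -!EFinM -EFinD lee_fin.
rewrite le_eqVlt; apply/orP; left; apply/eqP; ring.
Qed.

Lemma key2 (E : R -> R) : evar X (H_mean X mu) E ->
  forall a b, X a -> X b -> a <= mu -> mu <= b -> a < b ->
  (b - mu) * E a + (mu - a) * E b <= b - a.
Proof.
move=> hE a b Xa Xb am mb ab.
have ba : 0 < b - a by rewrite subr_gt0.
have ba0 : b - a != 0 by rewrite gt_eqF.
have p0 : 0 <= (b - mu) / (b - a) by apply: divr_ge0; rewrite ?subr_ge0 // ltW.
have q0 : 0 <= (mu - a) / (b - a) by apply: divr_ge0; rewrite ?subr_ge0 // ltW.
have h := @key E hE a b ((b - mu) / (b - a)) ((mu - a) / (b - a)) Xa Xb p0 q0 _ _.
rewrite (_ : (b - mu) * E a + (mu - a) * E b =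
   (b - a) * ((b - mu) / (b - a) * E a + (mu - a) / (b - a) * E b)); last by field.
apply: ler_piMr; first exact: ltW.
apply: h; field => //.
Qed.

Lemma I_bounds beta : (mu - 1)^-1 <= beta <= mu^-1 ->
  beta * mu <= 1 /\ beta * (mu - 1) <= 1.
Proof.
move=> /andP[b1 b2]; split.
  by rewrite -ler_pdivlMr // div1r.
by rewrite -ler_ndivrMr ?div1r // subr_lt0.
Qed.

Lemma majorize (E : R -> R) : evar X (H_mean X mu) E ->
  exists2 E', Ecb X mu E' & dominates X E' E.
Proof.
move=> hE; have [_ E0 _ _] := hE.
pose S := [set y | exists2 a, X a /\ a < mu & y = (1 - E a) / (mu - a)].
pose beta := inf S.
have Sne : nonempty S by exists ((1 - E 0) / (mu - 0)); exists 0.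
have lbS b : X b -> mu < b -> lbound S ((E b - 1) / (b - mu)).
  move=> Xb mb y [a [Xa am] ->].
  rewrite ler_pdivrMr ?subr_gt0 // mulrAC ler_pdivlMr ?subr_gt0 //.
  have := @key2 E hE _ _ Xa Xb (ltW am) (ltW mb) (lt_trans am mb).
  nra.
have hasl : has_lbound S by exists ((E 1 - 1) / (1 - mu)); exact: lbS.
have bS : lbound S beta := ge_inf hasl.
have b_up : beta <= (1 - E 0) / (mu - 0) by apply: bS; exists 0.
have b_lo : (E 1 - 1) / (1 - mu) <= beta := lb_le_inf Sne (lbS 1 X1 mu1).
exists (E_beta X mu beta).
  exists beta => //; apply/andP; split.
    have -> : (mu - 1)^-1 = (-1) / (1 - mu) by rewrite -opprB invrN mulN1r.
    apply: (le_trans _ b_lo); rewrite ler_pM2r ?invr_gt0 ?subr_gt0 //.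
    by have := E0 1; lra.
  apply: (le_trans b_up); rewrite subr0 -[X in _ <= X]mul1r.
  rewrite ler_pM2r ?invr_gt0 //.
  by have := E0 0; lra.
move=> x Xx; rewrite /E_beta (_ : x \in X = true); last exact: mem_set.
have [xm|xm|xm] := ltgtP x mu.
- have : beta <= (1 - E x) / (mu - x) by apply: bS; exists x.
  rewrite ler_pdivlMr ?subr_gt0 // => h.
  nra.
- have := lb_le_inf Sne (lbS x Xx xm).
  rewrite ler_pdivrMr ?subr_gt0 // => h.
  nra.
- subst x; rewrite subrr mulr0 addr0.
  have := @key E hE mu mu 1 0 Xx Xx ler01 (lexx 0) (addr0 1) _.
  rewrite mul1r mul0r addr0 => h; have := h erefl; by rewrite mul1r mul0r addr0.
Qed.

Lemma optimal beta (E : R -> R) : (mu - 1)^-1 <= beta <= mu^-1 ->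
  evar X (H_mean X mu) E -> dominates X E (E_beta X mu beta) ->
  E = E_beta X mu beta.
Proof.
move=> hb hE dom; have [_ E0 Eout _] := hE.
have [h1 h2] := @I_bounds beta hb.
apply/funext => x.
have [Xx|nXx] := pselect (X x); last first.
  rewrite Eout // /E_beta (_ : x \in X = false) //.
  by apply/negP => /set_mem.
apply/le_anti/andP; split; last exact: dom.
have d1 := dom 1 X1; have d0 := dom 0 X0.
rewrite /E_beta (_ : 1 \in X = true) in d1; last exact: mem_set.
rewrite /E_beta (_ : 0 \in X = true) in d0; last exact: mem_set.
rewrite /E_beta (_ : x \in X = true); last exact: mem_set.
have [xm|xm|xm] := ltgtP x mu.
- have K := @key2 E hE _ _ Xx X1 (ltW xm) (ltW mu1) (lt_trans xm mu1).
  have P1 : 0 <= (mu - x) * (E 1 - (1 + beta * (1 - mu))).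
    by apply: mulr_ge0; lra.
  have P2 : (1 - mu) * (E x - (1 + beta * (x - mu))) <= 0 by nra.
  by rewrite -subr_le0; move: P2; rewrite pmulr_rle0 // subr_gt0.
- have K := @key2 E hE _ _ X0 Xx (ltW mu0) (ltW xm) (lt_trans mu0 xm).
  have P1 : 0 <= (x - mu) * (E 0 - (1 + beta * (0 - mu))).
    by apply: mulr_ge0; lra.
  have P2 : mu * (E x - (1 + beta * (x - mu))) <= 0 by nra.
  by rewrite -subr_le0; move: P2; rewrite pmulr_rle0.
- subst x; rewrite subrr mulr0 addr0.
  have := @key E hE mu mu 1 0 Xx Xx ler01 (lexx 0) (addr0 1) _.
  rewrite mul1r mul0r addr0 => h; have := h erefl; by rewrite mul1r mul0r addr0.
Qed.

End Main.

Theorem theorem1 (R : realType) (X : set R) (mu : R) :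
  measurable X -> X `<=` `[0, 1] -> X 0 -> X 1 -> 0 < mu < 1 ->
  optimal_eclass X (H_mean X mu) (Ecb X mu).
Proof.
move=> mX X01 X0 X1 /andP[mu0 mu1].
split; first split.
- move=> E [beta hb ->]; exact: (@Ebeta_evar R X mu mX X01 mu0 mu1 beta hb).
- move=> E hE; exact: (@majorize R X mu X0 X1 mu0 mu1 E hE).
move=> C' [eC' majC'] E [beta hb ->].
have [E' C'E' dom] := majC' _ (@Ebeta_evar R X mu mX X01 mu0 mu1 beta hb).
by rewrite -(@optimal R X mu X0 X1 mu0 mu1 beta E' hb (eC' _ C'E') dom).
Qed.
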